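(* Greedy Dual is $(2m+1)$-competitive for both MPMD and MBPMD. That is, for every metric space and every instance $\mathcal{I}$ with $2m$ requests, the total cost (connection plus waiting) of the matching produced by Greedy Dual is at most $(2m+1)\cdot\mathrm{Opt}(\mathcal{I})$.
   Context: Problem (MPMD / MBPMD). Let $(\mathcal{X},\mathrm{dist})$ be a metric space. An instance consists of $2m$ requests $u_1,\dots,u_{2m}$. Each request $u$ is a triple $(\mathrm{pos}(u),\mathrm{atime}(u),\mathrm{sgn}(u))$, where $\mathrm{pos}(u)\in\mathcal{X}$ is its location and $\mathrm{atime}(u)\ge0$ is its arrival time, with arrival times nondecreasing. In MPMD, $\mathrm{sgn}(u)=0$ for all requests. In MBPMD, exactly $m$ requests have sign $+1$ and $m$ have sign $-1$. At time $\tau$, an algorithm may match two arrived, unmatched requests $u,v$ with $\mathrm{sgn}(u)=-\mathrm{sgn}(v)$, at cost $\mathrm{dist}(\mathrm{pos}(u),\mathrm{pos}(v))$ (connection cost) plus $(\tau-\mathrm{atime}(u))+(\tau-\mathrm{atime}(v))$ (waiting costs). All requests must eventually be matched. The online algorithm does not know future requests or $m$ in advance. $\mathrm{Opt}(\mathcal{I})$ denotes the minimum total cost of an offline solution that knows the whole input in advance. Notation. Edges are unordered pairs $\{u,v\}$ of distinct requests with $\mathrm{sgn}(u)=-\mathrm{sgn}(v)$. For a set $S$ of requests, $\delta(S)$ is the set of edges with exactly one endpoint in $S$. In MPMD, $\mathrm{sur}(S)=|S|\bmod 2$; in MBPMD, $\mathrm{sur}(S)=|\sum_{u\in S}\mathrm{sgn}(u)|$.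 For an edge $e=(u,v)$, $\mathrm{cost}(e)=\mathrm{dist}(\mathrm{pos}(u),\mathrm{pos}(v))+|\mathrm{atime}(u)-\mathrm{atime}(v)|$. Algorithm Greedy Dual (GD). GD maintains a dual variable $y_S\ge0$ for every set $S$ of already-arrived requests; $y_S(\tau)$ denotes its value at time $\tau$. It also maintains a partition of the arrived requests into active sets, with $\mathcal{A}(u)$ denoting the active set containing $u$. An active set is growing if it contains at least one free request, and non-growing otherwise. - When a request $u$ arrives, $\mathcal{A}(u)\leftarrow\{u\}$ becomes a new active set, and $y_S\leftarrow 0$ for every new set $S$ containing $u$. - Tight-constraint event: while there is an edge $e=(u,v)$ between arrived requests with $\mathcal{A}(u)\neq\mathcal{A}(v)$ and $\sum_{S:\,e\in\delta(S)}y_S=\mathrm{cost}(e)$, GD does the following. It merges the two sets: $S=\mathcal{A}(u)\cup\mathcal{A}(v)$ becomes active and $\mathcal{A}(w)\leftarrow S$ for all $w\in S$, while $\mathcal{A}(u)$ and $\mathcal{A}(v)$ become inactive. It marks the edge $e$. Then, while there are free $u',v'\in S$ with $\mathrm{sgn}(u')=-\mathrm{sgn}(v')$, it matches $u'$ with $v'$ at the current time. - At all other times, $y_S$ increases continuously at rate $1$ (the same rate as time) for every active growing set $S$; all other dual variables stay constant. *)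

(* Defs.v *)
From Stdlib Require Import Reals ZArith.
From mathcomp Require Import all_boot.
From Stdlib Require List.

Local Open Scope R_scope.

Record metric (X : Type) (dist : X -> X -> R) : Prop := {
  dist_refl  : forall x, dist x x = 0;
  dist_sep   : forall x y, dist x y = 0 -> x = y;
  dist_sym   : forall x y, dist x y = dist y x;
  dist_nonneg: forall x y, 0 <= dist x y;
  dist_tri   : forall x y z, dist x z <= dist x y + dist y z
}.

Record instance (X : Type) (n : nat) := Inst {
  pos   : 'I_n -> X;
  atime : 'I_n -> R;
  sgn   : 'I_n -> Z
}.
Arguments pos {X n}.
Arguments atime {X n}.
Arguments sgn {X n}.

(* Well-formed instance with 2m requests.  [bip = false]: MPMD (all signs 0);
   [bip = true]: MBPMD (m signs +1 and m signs -1).  Arrival times are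
   nonnegative and nondecreasing in the index. *)
Definition valid_instance (X : Type) (bip : bool) (m : nat)
    (I : instance X (2 * m)) : Prop :=
  (forall i, 0 <= atime I i) /\
  (forall i j : 'I_(2 * m), (i <= j)%N -> atime I i <= atime I j) /\
  (if bip then
     (forall i, sgn I i = 1%Z \/ sgn I i = (-1)%Z) /\
     #|[set i | Z.eqb (sgn I i) 1%Z]| = m /\
     #|[set i | Z.eqb (sgn I i) (-1)%Z]| = m
   else forall i, sgn I i = 0%Z).

Section Matching.
Variables (X : Type) (dist : X -> X -> R) (n : nat) (I : instance X n).

Definition compat (u v : 'I_n) : Prop := u <> v /\ sgn I u = (- sgn I v)%Z.

Definition ecost (u v : 'I_n) : R :=
  dist (pos I u) (pos I v) + Rabs (atime I u - atime I v).

(* A matched pair (u, v, tau): u and v matched at time tau. *)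
Definition mtriple := ('I_n * 'I_n * R)%type.

Definition pair_cost (p : mtriple) : R :=
  let '(u, v, t) := p in
  dist (pos I u) (pos I v) + (t - atime I u) + (t - atime I v).

Definition total_cost (s : seq mtriple) : R :=
  foldr (fun p acc => pair_cost p + acc) 0 s.

Definition endpoints (s : seq mtriple) : seq 'I_n :=
  flatten [seq [:: p.1.1; p.1.2] | p <- s].

Definition offline_solution (s : seq mtriple) : Prop :=
  uniq (endpoints s) /\ (forall w, w \in endpoints s) /\
  List.Forall (fun p : mtriple => let '(u, v, t) := p in
                 compat u v /\ atime I u <= t /\ atime I v <= t) s.

Record gstate := GS {
  now  : R;
  narr : nat;
  act  : 'I_n -> {set 'I_n};       (* A(u), for arrived u                 *)
  dual : {set 'I_n} -> R;
  out  : seq mtriple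
}.

Definition arrived (s : gstate) (u : 'I_n) : bool := (u < narr s)%N.
Definition free (s : gstate) (u : 'I_n) : bool := u \notin endpoints (out s).
Definition active (s : gstate) (S : {set 'I_n}) : bool :=
  [exists u, arrived s u && (act s u == S)].
Definition growing (s : gstate) (S : {set 'I_n}) : bool :=
  active s S && [exists w in S, free s w].

Definition dualsum (y : {set 'I_n} -> R) (u v : 'I_n) : R :=
  \big[Rplus/0]_(S : {set 'I_n} | (u \in S) != (v \in S)) y S.

Definition no_tight (s : gstate) : Prop :=
  forall u v, arrived s u -> arrived s v -> compat u v ->
    act s u != act s v -> dualsum (dual s) u v < ecost u v.

Definition dual_feasible (s : gstate) : Prop :=
  forall u v, arrived s u -> arrived s v -> compat u v ->
    act s u != act s v -> dualsum (dual s) u v <= ecost u v.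

Definition init_state : gstate :=
  GS 0 0 (fun _ => set0) (fun _ => 0) [::].

Definition grown (s : gstate) (d : R) : gstate :=
  GS (now s + d) (narr s) (act s)
     (fun S => if growing s S then dual s S + d else dual s S) (out s).

Definition arrive (s : gstate) (u : 'I_n) : gstate :=
  GS (now s) (narr s).+1 (fun w => if w == u then [set u] else act s w)
     (fun S => if u \in S then 0 else dual s S) (out s).

Definition merged (s : gstate) (u v : 'I_n) (ps : seq ('I_n * 'I_n)) : gstate :=
  let S := act s u :|: act s v in
  GS (now s) (narr s) (fun w => if w \in S then S else act s w) (dual s)
     (out s ++ [seq (p.1, p.2, now s) | p <- ps]).

(* the pairs ps are those matched by the inner while-loop: disjoint pairs of
   free requests of S with opposite signs, after which no two free requests
   of S with opposite signs remain *)
Definition merge_matching_ok (s : gstate) (u v : 'I_n)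
    (ps : seq ('I_n * 'I_n)) : Prop :=
  let S := act s u :|: act s v in
  let s' := merged s u v ps in
  uniq (flatten [seq [:: p.1; p.2] | p <- ps]) /\
  List.Forall (fun p : 'I_n * 'I_n =>
     [/\ p.1 \in S, p.2 \in S, free s p.1, free s p.2 & compat p.1 p.2]) ps /\
  (forall a b, a \in S -> b \in S -> free s' a -> free s' b -> ~ compat a b).

Inductive gd_step : gstate -> gstate -> Prop :=
| gd_grow s d :
    0 < d ->
    no_tight s ->
    (forall u : 'I_n, ~~ arrived s u -> now s + d <= atime I u) ->
    dual_feasible (grown s d) ->
    gd_step s (grown s d)
| gd_arrive s (u : 'I_n) :
    nat_of_ord u = narr s ->
    atime I u = now s ->
    gd_step s (arrive s u)
| gd_merge s u v ps :
    arrived s u -> arrived s v -> compat u v -> act s u != act s v ->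
    dualsum (dual s) u v = ecost u v ->
    merge_matching_ok s u v ps ->
    gd_step s (merged s u v ps).

(* states reachable by some execution of Greedy Dual (any tie-breaking) *)
Inductive gd_reach : gstate -> Prop :=
| gd_reach0 : gd_reach init_state
| gd_reachS s s' : gd_reach s -> gd_step s s' -> gd_reach s'.

Definition gd_done (s : gstate) : Prop :=
  narr s = n /\ forall u, ~~ free s u.

End Matching.

Arguments metric {X}.
Arguments valid_instance {X} bip {m} I.
Arguments gd_reach {X} dist {n} I _.
Arguments gd_done {n} s.
Arguments offline_solution {X n} I s.
Arguments total_cost {X} dist {n} I s.
Arguments out {n} g.

(* Main.v *)
From HB Require Import structures.
From Stdlib Require Import Reals ZArith Lra Lia.
From Stdlib Require List.
From mathcomp Require Import all_boot.
Require Import Defs.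

Local Open Scope R_scope.
#[local] Arguments arrived {n}.
#[local] Arguments free {n}.
#[local] Arguments act {n}.
#[local] Arguments dual {n}.
#[local] Arguments now {n}.
#[local] Arguments narr {n}.
#[local] Arguments growing {n}.
#[local] Arguments active {n}.
#[local] Arguments endpoints {n}.
#[local] Arguments dualsum {n}.
#[local] Arguments grown {n}.
#[local] Arguments arrive {n}.
#[local] Arguments merged {n}.
#[local] Arguments init_state {n}.
#[local] Arguments compat {X n}.
#[local] Arguments ecost {X} dist {n}.
#[local] Arguments pair_cost {X} dist {n}.
#[local] Arguments merge_matching_ok {X n}.
#[local] Arguments dual_feasible {X} dist {n}.
#[local] Arguments no_tight {X} dist {n}.
#[local] Arguments gd_step {X} dist {n}.


HB.instance Definition _ := Monoid.isComLaw.Build R 0 Rplus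
  (fun x y z => esym (Rplus_assoc x y z)) Rplus_comm Rplus_0_l.
HB.instance Definition _ := Monoid.isComLaw.Build Z 0%Z Z.add
  Z.add_assoc Z.add_comm Z.add_0_l.

Lemma Rsum_le (I0 : Type) (r : seq I0) (P : pred I0) (F G : I0 -> R) :
  (forall i, P i -> F i <= G i) ->
  \big[Rplus/0]_(i <- r | P i) F i <= \big[Rplus/0]_(i <- r | P i) G i.
Proof.
move=> H; apply: (big_ind2 (fun a b => a <= b)) => //; first lra.
by move=> *; lra.
Qed.

Lemma Rsum_ge0 (I0 : Type) (r : seq I0) (P : pred I0) (F : I0 -> R) :
  (forall i, P i -> 0 <= F i) -> 0 <= \big[Rplus/0]_(i <- r | P i) F i.
Proof.
move=> H; apply: (big_ind (fun a => 0 <= a)) => //; first lra.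
by move=> *; lra.
Qed.

Lemma Rsum_mkle (I0 : finType) (P Q : pred I0) (F : I0 -> R) :
  (forall i, 0 <= F i) -> (forall i, P i -> Q i) ->
  \big[Rplus/0]_(i | P i) F i <= \big[Rplus/0]_(i | Q i) F i.
Proof.
move=> H0 HPQ; rewrite (big_mkcond P) (big_mkcond Q); apply: Rsum_le => i _.
case: (boolP (P i)) => Pi; first by rewrite (HPQ _ Pi); lra.
by case: (Q i); [apply: H0 | lra].
Qed.

Lemma Rsum_const_mul (I0 : Type) (r : seq I0) (P : pred I0) (F : I0 -> R) c :
  \big[Rplus/0]_(i <- r | P i) (c * F i) = c * \big[Rplus/0]_(i <- r | P i) F i.
Proof.
elim: r => [|x r IH]; first by rewrite !big_nil; ring.
by rewrite !big_cons; case: (P x); rewrite IH; ring.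
Qed.

Lemma INR_sum (I0 : Type) (r : seq I0) (P : pred I0) (F : I0 -> nat) :
  INR (\sum_(i <- r | P i) F i)%N = \big[Rplus/0]_(i <- r | P i) INR (F i).
Proof. by apply: (big_morph INR plus_INR). Qed.

Lemma Z_sum (I0 : Type) (r : seq I0) (P : pred I0) (F : I0 -> nat) :
  Z.of_nat (\sum_(i <- r | P i) F i)%N = \big[Z.add/0%Z]_(i <- r | P i) Z.of_nat (F i).
Proof. by apply: (big_morph Z.of_nat Nat2Z.inj_add). Qed.

Lemma Rsum_cat (I0 : Type) (r1 r2 : seq I0) (P : pred I0) (F : I0 -> R) :
  \big[Rplus/0]_(i <- r1 ++ r2 | P i) F i =
  \big[Rplus/0]_(i <- r1 | P i) F i + \big[Rplus/0]_(i <- r2 | P i) F i.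
Proof. by rewrite big_cat. Qed.

Lemma Rsum_ID (I0 : Type) (r : seq I0) (a P : pred I0) (F : I0 -> R) :
  \big[Rplus/0]_(i <- r | P i) F i =
  \big[Rplus/0]_(i <- r | P i && a i) F i + \big[Rplus/0]_(i <- r | P i && ~~ a i) F i.
Proof. by rewrite (bigID a). Qed.

Lemma Rsum_split (I0 : Type) (r : seq I0) (P : pred I0) (F G : I0 -> R) :
  \big[Rplus/0]_(i <- r | P i) (F i + G i) =
  \big[Rplus/0]_(i <- r | P i) F i + \big[Rplus/0]_(i <- r | P i) G i.
Proof. by rewrite big_split. Qed.

Lemma Rsum_D1 (I0 : finType) (j : I0) (P : pred I0) (F : I0 -> R) :
  P j -> \big[Rplus/0]_(i | P i) F i = F j + \big[Rplus/0]_(i | P i && (i != j)) F i.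
Proof. by move=> Pj; rewrite (bigD1 j). Qed.

Section Main.
Variables (X : Type) (dist : X -> X -> R) (n : nat) (I : instance X n)
  (sol : seq (mtriple n)).
Hypothesis Hmet : metric dist.
Hypothesis Hsgn : (forall i, sgn I i = 0%Z) \/
                  (forall i, sgn I i = 1%Z \/ sgn I i = (-1)%Z).
Hypothesis Hsol : offline_solution I sol.

Local Notation st := (gstate n).
Local Notation D a b := (dist (pos I a) (pos I b)).

Definition Yall (y : {set 'I_n} -> R) (v : 'I_n) :=
  \big[Rplus/0]_(T : {set 'I_n} | v \in T) y T.
Definition Ysum (y : {set 'I_n} -> R) (S : {set 'I_n}) (a : 'I_n) :=
  \big[Rplus/0]_(T : {set 'I_n} | (T \subset S) && (a \in T)) y T.
Definition Zsum (y : {set 'I_n} -> R) (S : {set 'I_n}) :=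
  \big[Rplus/0]_(T : {set 'I_n} | T \subset S) y T.
Definition ysum (y : {set 'I_n} -> R) := \big[Rplus/0]_(T : {set 'I_n}) y T.
Definition cnt (T : {set 'I_n}) : nat :=
  (\sum_(p <- sol) ((p.1.1 \in T) (+) (p.1.2 \in T) : nat))%N.
Definition cy (y : {set 'I_n} -> R) := \big[Rplus/0]_(T : {set 'I_n}) (INR (cnt T) * y T).
Definition conn (s : st) := \big[Rplus/0]_(p <- out s) D p.1.1 p.1.2.
Definition waitp (p : mtriple n) := (p.2 - atime I p.1.1) + (p.2 - atime I p.1.2).
Definition wait (s : st) :=
  \big[Rplus/0]_(p <- out s) waitp p +
  \big[Rplus/0]_(w | arrived s w && free s w) (now s - atime I w).

Record Inv (s : st) : Prop := {
  i_self : forall w, arrived s w -> w \in act s w;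
  i_part : forall w a, arrived s w -> a \in act s w -> act s a = act s w;
  i_arr  : forall w a, arrived s w -> a \in act s w -> arrived s a;
  i_ypos : forall T, 0 <= dual s T;
  i_ysup : forall T, dual s T <> 0 -> T != set0 /\
             forall w, w \in T -> arrived s w /\ T \subset act s w;
  i_feas : forall u v, arrived s u -> arrived s v -> compat I u v ->
             dualsum (dual s) u v <= ecost dist I u v;
  i_yall : forall v, arrived s v -> Yall (dual s) v <= now s - atime I v;
  i_dist : forall w a b, arrived s w -> a \in act s w -> b \in act s w ->
             D a b + Ysum (dual s) (act s w) a + Ysum (dual s) (act s w) b
             <= 2 * Zsum (dual s) (act s w);
  i_conn : conn s <= 2 * INR (size (out s)) * ysum (dual s);
  i_wy   : ysum (dual s) <= wait s;
  i_wc   : wait s <= cy (dual s);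
  i_uniq : uniq (endpoints (out s));
  i_earr : forall w, w \in endpoints (out s) -> arrived s w;
  i_pin  : forall p w, List.In p (out s) -> arrived s w ->
             (p.1.1 \in act s w) = (p.1.2 \in act s w);
  i_pcmp : forall p, List.In p (out s) -> compat I p.1.1 p.1.2;
  i_fre  : forall w a b, arrived s w -> a \in act s w -> b \in act s w ->
             free s a -> free s b -> ~ compat I a b
}.

Arguments i_self {s}.
Arguments i_part {s}.
Arguments i_arr {s}.
Arguments i_ypos {s}.
Arguments i_ysup {s}.
Arguments i_feas {s}.
Arguments i_yall {s}.
Arguments i_dist {s}.
Arguments i_conn {s}.
Arguments i_wy {s}.
Arguments i_wc {s}.
Arguments i_uniq {s}.
Arguments i_earr {s}.
Arguments i_pin {s}.
Arguments i_pcmp {s}.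
Arguments i_fre {s}.

Lemma inv_init : Inv init_state.
Proof.
split; rewrite /arrived /free /= ?ltn0 //.
all: try (move=> T; lra).
- rewrite /conn big_nil /ysum big1 //; lra.
- rewrite /wait /ysum big_nil big1 // (big_pred0 _ _ _ _ (fun=> erefl false)); lra.
- rewrite /wait /cy big_nil (big_pred0 _ _ _ _ (fun=> erefl false)) big1;
  [lra | move=> *; ring].
Qed.


Lemma dist0 a : D a a = 0.
Proof. by apply: (@dist_refl _ _ Hmet). Qed.
Lemma distS a b : D a b = D b a.
Proof. by apply: (@dist_sym _ _ Hmet). Qed.
Lemma distP a b : 0 <= D a b.
Proof. by apply: (@dist_nonneg _ _ Hmet). Qed.
Lemma distT a b c : D a c <= D a b + D b c.
Proof. by apply: (@dist_tri _ _ Hmet). Qed.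

Lemma ecost_sym u v : ecost dist I u v = ecost dist I v u.
Proof. by rewrite /ecost distS Rabs_minus_sym. Qed.

Lemma dist_ecost u v : D u v <= ecost dist I u v.
Proof. rewrite /ecost; have := Rabs_pos (atime I u - atime I v); lra. Qed.

Lemma dualsum_sym (y : {set 'I_n} -> R) (u v : 'I_n) : dualsum y u v = dualsum y v u.
Proof. by rewrite /dualsum; apply: eq_bigl => T; rewrite eq_sym. Qed.

Lemma compat_sym u v : compat I u v -> compat I v u.
Proof. by case=> H1 H2; split; [move=> E; apply: H1 | lia]. Qed.

Lemma compat_neq u v : compat I u v -> u != v.
Proof. by case=> H _; apply/eqP. Qed.

Lemma Rsum_mkle' (I0 : finType) (P Q : pred I0) (F : I0 -> R) :
  (forall i, 0 <= F i) -> (forall i, P i -> Q i \/ F i = 0) ->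
  \big[Rplus/0]_(i | P i) F i <= \big[Rplus/0]_(i | Q i) F i.
Proof.
move=> H0 HPQ; rewrite (big_mkcond P) (big_mkcond Q); apply: Rsum_le => i _.
case: (boolP (P i)) => Pi.
  case: (HPQ _ Pi) => [->|->]; first lra.
  by case: (Q i); lra.
by case: (Q i); [apply: H0 | lra].
Qed.

Lemma In_endpoints (s : seq (mtriple n)) p :
  List.In p s -> (p.1.1 \in endpoints s) /\ (p.1.2 \in endpoints s).
Proof.
elim: s => [//|q s IH] /= [->|/IH [H1 H2]].
  by rewrite !inE !eqxx /= orbT.
by rewrite !inE H1 H2 !orbT.
Qed.

Lemma endpoints_cat (s1 s2 : seq (mtriple n)) : endpoints (s1 ++ s2) = endpoints s1 ++ endpoints s2.
Proof. by rewrite /endpoints map_cat flatten_cat. Qed.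

Lemma size_endpoints (s : seq (mtriple n)) : size (endpoints s) = (2 * size s)%N.
Proof.
elim: s => [//|q s IH]; rewrite /endpoints /= -/(endpoints s) IH.
by rewrite mulnS.
Qed.

Section Arrive.
Variables (s : st) (u : 'I_n).
Hypothesis Hs : Inv s.
Hypothesis Hun : nat_of_ord u = narr s.
Hypothesis Hut : atime I u = now s.

Let s' := arrive s u.

Lemma arr_old : ~~ arrived s u.
Proof. by rewrite /arrived Hun ltnn. Qed.

Lemma arr_new w : arrived s' w = arrived s w || (w == u).
Proof.
rewrite /arrived /= ltnS leq_eqVlt orbC; congr (_ || _).
by rewrite -Hun; apply/eqP/eqP => [E|->//]; apply: val_inj.
Qed.

Lemma arr_dual0 (T : {set 'I_n}) : u \in T -> dual s T = 0.
Proof.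
move=> uT; case: (Req_dec (dual s T) 0) => // /(i_ysup Hs) [_ /(_ u uT) [H _]].
by move: arr_old; rewrite H.
Qed.

Lemma arr_dual : dual s' = dual s.
Proof.
apply: FunctionalExtensionality.functional_extensionality => T /=.
by case: ifP => // /arr_dual0 ->.
Qed.

Lemma arr_neq w : arrived s w -> w != u.
Proof. by move=> Hw; apply/eqP => E; move: arr_old; rewrite -E Hw. Qed.

Lemma arr_act w : act s' w = if w == u then [set u] else act s w.
Proof. by []. Qed.

Lemma inv_arrive : Inv s'.
Proof.
have Ha := arr_new; have Ed := arr_dual.
have Hall0 : forall T : {set 'I_n}, T \subset [set u] -> dual s T = 0.
  move=> T TS; case: (Req_dec (dual s T) 0) => // /(i_ysup Hs) [/set0Pn [t tT] _].
  by apply: arr_dual0; move/subsetP: TS => /(_ t tT); rewrite inE => /eqP <-.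
split; rewrite ?Ed.
- move=> w; rewrite Ha arr_act; case: eqVneq => [->|_] /=; rewrite ?orbF; first by rewrite inE.
  by apply: (i_self Hs).
- move=> w a; rewrite Ha !arr_act; case: (eqVneq w u) => [->|_] /=; rewrite ?orbF.
    by rewrite inE => _ /eqP ->; rewrite eqxx.
  move=> Hw Ha'; have := i_arr Hs _ _ Hw Ha' => /arr_neq /negbTE ->.
  exact: (i_part Hs _ _ Hw Ha').
- move=> w a; rewrite !Ha arr_act; case: (eqVneq w u) => [->|_] /=; rewrite ?orbF.
    by rewrite inE => _ ->; rewrite orbT.
  by move=> Hw Ha'; rewrite (i_arr Hs _ _ Hw Ha').
- by apply (i_ypos Hs).
- move=> T /(i_ysup Hs) [H1 H2]; split=> // w /H2 [Hw HT].
  by rewrite Ha Hw arr_act (negbTE (arr_neq _ Hw)).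
- have key : forall a v, arrived s v -> a = u -> compat I a v ->
      dualsum (dual s) a v <= ecost dist I a v.
    move=> a v Hv -> Hc.
    apply: (Rle_trans _ (Yall (dual s) v)).
      apply: Rsum_mkle' => [T|T]; first exact: (i_ypos Hs T).
      case: (boolP (u \in T)) => uT; last by move=> /= /negbNE ->; left.
      by move=> _; right; apply: arr_dual0.
    apply: (Rle_trans _ _ _ (i_yall Hs _ Hv)); rewrite -Hut /ecost.
    have := distP u v; have := Rle_abs (atime I u - atime I v); lra.
  move=> a b; rewrite !Ha.
  case/orP=> [Ha'|/eqP Ea]; case/orP=> [Hb'|/eqP Eb].
  + exact: (i_feas Hs _ _ Ha' Hb').
  + move=> Hc; rewrite dualsum_sym ecost_sym; apply: (key b a Ha' Eb).
    by apply: compat_sym.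
  + by apply: (key a b Hb' Ea).
  + by move=> /compat_neq; rewrite Ea Eb eqxx.
- move=> v; rewrite Ha /=; case/orP=> [Hv|/eqP ->]; first by apply (i_yall Hs).
  rewrite /Yall big1 ?Hut; first lra.
  by move=> T; apply: arr_dual0.
- move=> w a b; rewrite Ha arr_act; case: (eqVneq w u) => [->|_] /=; rewrite ?orbF;
    last by apply (i_dist Hs).
  rewrite !inE => _ /eqP -> /eqP ->; rewrite dist0 /Ysum /Zsum !big1; first lra.
  1,2: move=> T H; apply: Hall0; move: H; try case/andP; by [].
- exact (i_conn Hs).
- have -> : wait s' = wait s.
    rewrite /wait /=; congr (_ + _); rewrite (big_mkcond (fun w => _ && _)).
    rewrite [in RHS](big_mkcond (fun w => _ && _)); apply: eq_bigr => w _.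
    rewrite Ha; case: (eqVneq w u) => [->|_]; last by rewrite orbF.
    by rewrite (negbTE arr_old) /= Hut; case: ifP => //; lra.
  by apply (i_wy Hs).
- have -> : wait s' = wait s.
    rewrite /wait /=; congr (_ + _); rewrite (big_mkcond (fun w => _ && _)).
    rewrite [in RHS](big_mkcond (fun w => _ && _)); apply: eq_bigr => w _.
    rewrite Ha; case: (eqVneq w u) => [->|_]; last by rewrite orbF.
    by rewrite (negbTE arr_old) /= Hut; case: ifP => //; lra.
  by apply (i_wc Hs).
- by apply (i_uniq Hs).
- by move=> w /(i_earr Hs) Hw; rewrite Ha Hw.
- move=> p w Hp; rewrite Ha arr_act; case: (eqVneq w u) => [->|_] /=; rewrite ?orbF; last first.
    by apply (i_pin Hs).
  move=> _; case: (In_endpoints _ _ Hp) => /(i_earr Hs) /arr_neq H1 /(i_earr Hs) /arr_neq H2.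
  by rewrite !inE (negbTE H1) (negbTE H2).
- by apply (i_pcmp Hs).
- move=> w a b; rewrite Ha arr_act; case: (eqVneq w u) => [->|_] /=; rewrite ?orbF; last first.
    by apply (i_fre Hs).
  by rewrite !inE => _ /eqP -> /eqP -> _ _ /compat_neq; rewrite eqxx.
Qed.

End Arrive.

Lemma In_mem (T0 : eqType) (x : T0) (r : seq T0) : List.In x r <-> x \in r.
Proof.
elim: r => [//|y r IH] /=; rewrite inE; split.
  by case=> [->|/IH ->]; rewrite ?eqxx ?orbT.
by case/orP=> [/eqP ->|/IH]; [left|right].
Qed.

Lemma Rsum_constR (I0 : Type) (r : seq I0) (c : R) :
  \big[Rplus/0]_(i <- r) c = INR (size r) * c.
Proof.
elim: r => [|x r IH]; first by rewrite big_nil /=; ring.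
rewrite big_cons IH; change (size (x :: r)) with (S (size r)); rewrite S_INR; ring.
Qed.

Section Merge.
Variables (s : st) (u v : 'I_n) (ps : seq ('I_n * 'I_n)).
Hypothesis Hs : Inv s.
Hypothesis Hu : arrived s u.
Hypothesis Hv : arrived s v.
Hypothesis Huv : compat I u v.
Hypothesis Hne : act s u != act s v.
Hypothesis Htight : dualsum (dual s) u v = ecost dist I u v.
Hypothesis Hok : merge_matching_ok I s u v ps.

Let A := act s u.
Let B := act s v.
Let S := A :|: B.
Let s' := merged s u v ps.
Let eps := flatten [seq [:: p.1; p.2] | p <- ps].
Let y := dual s.

Lemma m_act w : act s' w = if w \in S then S else act s w.
Proof. by []. Qed.

Lemma m_actA {a} : a \in A -> act s a = A.
Proof. by move=> aA; apply: (i_part Hs _ _ Hu aA). Qed.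
Lemma m_actB {a} : a \in B -> act s a = B.
Proof. by move=> aB; apply: (i_part Hs _ _ Hv aB). Qed.

Lemma m_uA : u \in A. Proof. exact: (i_self Hs _ Hu). Qed.
Lemma m_vB : v \in B. Proof. exact: (i_self Hs _ Hv). Qed.

Lemma m_disj {a} : a \in A -> a \notin B.
Proof.
move=> aA; apply/negP => aB; move: Hne.
by rewrite -/A -/B -(m_actA aA) (m_actB aB) eqxx.
Qed.

Lemma m_arrS {a} : a \in S -> arrived s a.
Proof.
by rewrite inE => /orP [aA|aB]; [apply: (i_arr Hs _ _ Hu aA) | apply: (i_arr Hs _ _ Hv aB)].
Qed.

Lemma m_actS {a} : a \in S -> act s a \subset S.
Proof.
rewrite inE => /orP [aA|aB]; [rewrite m_actA // | rewrite m_actB //].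
  by apply: subsetUl.
by apply: subsetUr.
Qed.

Lemma m_out {w x} : arrived s w -> w \notin S -> x \in act s w -> x \notin S.
Proof.
move=> Hw wS xw; apply/negP => xS; move/negP: wS; apply.
have E : act s x = act s w by apply: (i_part Hs _ _ Hw xw).
move: xS; rewrite !inE => /orP [xA|xB].
  by rewrite -/A -(m_actA xA) E (i_self Hs _ Hw).
by rewrite -/B -(m_actB xB) E (i_self Hs _ Hw) orbT.
Qed.

Lemma m_sup {T : {set 'I_n}} {a} : y T <> 0 -> a \in T -> T \subset act s a.
Proof. by move=> /(i_ysup Hs) [_ H] /H []. Qed.

Lemma m_YS {a} : a \in A -> Ysum y S a = Ysum y A a.
Proof.
move=> aA; rewrite /Ysum (big_mkcond (fun T => _ && _)).
rewrite [in RHS](big_mkcond (fun T => _ && _)); apply: eq_bigr => T _.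
case: (Req_dec (y T) 0) => [->|Hy]; first by repeat (case: ifP => _).
case: (boolP (a \in T)) => aT; rewrite ?andbF ?andbT //.
have HT := m_sup Hy aT; rewrite m_actA // in HT.
by rewrite HT (subset_trans HT (subsetUl _ _)).
Qed.

Lemma m_YSB {b} : b \in B -> Ysum y S b = Ysum y B b.
Proof.
move=> bB; rewrite /Ysum (big_mkcond (fun T => _ && _)).
rewrite [in RHS](big_mkcond (fun T => _ && _)); apply: eq_bigr => T _.
case: (Req_dec (y T) 0) => [->|Hy]; first by repeat (case: ifP => _).
case: (boolP (b \in T)) => bT; rewrite ?andbF ?andbT //.
have HT := m_sup Hy bT; rewrite m_actB // in HT.
by rewrite HT (subset_trans HT (subsetUr _ _)).
Qed.

Lemma m_Z : Zsum y A + Zsum y B <= Zsum y S.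
Proof.
rewrite /Zsum [X in X + _ <= _]big_mkcond [X in _ + X <= _]big_mkcond.
rewrite -big_split [X in _ <= X]big_mkcond; apply: Rsum_le => T _ /=.
have y0 := i_ypos Hs T; rewrite -/y in y0.
case: (Req_dec (y T) 0) => [->|Hy]; first by repeat (case: ifP => _); lra.
have [t tT] : exists t, t \in T.
  by case: (i_ysup Hs T Hy) => /set0Pn [t tT] _; exists t.
case: (boolP (T \subset A)) => TA.
  have tA : t \in A by move/subsetP: TA; apply.
  have -> : (T \subset B) = false.
    by apply/negbTE/negP => /subsetP /(_ t tT); apply/negP/m_disj.
  by rewrite (subset_trans TA (subsetUl _ _)); lra.
case: (boolP (T \subset B)) => TB; last by case: ifP; lra.
by rewrite (subset_trans TB (subsetUr _ _)); lra.
Qed.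

Lemma m_tight : dualsum y u v = Ysum y A u + Ysum y B v.
Proof.
rewrite /dualsum /Ysum [X in X = _]big_mkcond [X in _ = X + _]big_mkcond.
rewrite [X in _ = _ + X]big_mkcond -big_split; apply: eq_bigr => T _ /=.
case: (Req_dec (y T) 0) => [->|Hy]; first by repeat (case: ifP => _); lra.
case: (boolP (u \in T)) => uT.
  have HT := m_sup Hy uT; rewrite m_actA ?m_uA // in HT.
  have vT : v \notin T.
    by apply/negP => /(subsetP HT) vA; move: (m_disj vA); rewrite m_vB.
  have TB : (T \subset B) = false.
    by apply/negbTE/negP => /subsetP /(_ u uT); apply/negP/m_disj/m_uA.
  by rewrite (negbTE vT) HT TB /=; lra.
case: (boolP (v \in T)) => vT /=; last by rewrite !andbF; lra.
have HT := m_sup Hy vT; rewrite m_actB ?m_vB // in HT.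
by rewrite HT andbF /=; lra.
Qed.

Lemma m_Ypos (T0 : {set 'I_n}) a : 0 <= Ysum y T0 a.
Proof. by apply: Rsum_ge0 => T _; apply: (i_ypos Hs). Qed.
Lemma m_Zpos (T0 : {set 'I_n}) : 0 <= Zsum y T0.
Proof. by apply: Rsum_ge0 => T _; apply: (i_ypos Hs). Qed.

Lemma m_distAB {a b} : a \in A -> b \in B ->
  D a b + Ysum y S a + Ysum y S b <= 2 * Zsum y S.
Proof.
move=> aA bB; rewrite m_YS // m_YSB //.
have h1 := i_dist Hs _ _ _ Hu aA m_uA.
have h2 := i_dist Hs _ _ _ Hv m_vB bB.
have h3 := distT a u b; have h4 := distT u v b.
have h5 := dist_ecost u v; rewrite -Htight m_tight in h5.
have := m_Z; rewrite -/y -/A -/B in h1 h2 *; lra.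
Qed.

Lemma m_distS {a b} : a \in S -> b \in S ->
  D a b + Ysum y S a + Ysum y S b <= 2 * Zsum y S.
Proof.
rewrite !inE => /orP [aA|aB] /orP [bA|bB].
- rewrite !m_YS //; have := i_dist Hs _ _ _ Hu aA bA; have := m_Z.
  have := m_Zpos B; rewrite -/y -/A; lra.
- exact: m_distAB.
- rewrite distS; have := m_distAB bA aB; lra.
- rewrite !m_YSB //; have := i_dist Hs _ _ _ Hv aB bB; have := m_Z.
  have := m_Zpos A; rewrite -/y -/B; lra.
Qed.

Let nps := [seq (p.1, p.2, now s) | p <- ps].

Lemma m_endmap : endpoints nps = eps.
Proof. by rewrite /endpoints /nps /eps; elim: ps => [|q r /= ->]. Qed.

Lemma m_outs : out s' = out s ++ nps.
Proof. by []. Qed.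

Lemma m_free w : free s' w = free s w && (w \notin eps).
Proof. by rewrite /free m_outs endpoints_cat mem_cat negb_or m_endmap. Qed.

Lemma m_ps p : p \in ps ->
  [/\ p.1 \in S, p.2 \in S, free s p.1, free s p.2 & compat I p.1 p.2].
Proof.
case: Hok => _ [HF _] /In_mem Hp.
by move/List.Forall_forall: HF => /(_ p Hp).
Qed.

Lemma m_eps {w} : w \in eps -> (w \in S) && free s w.
Proof.
case/flatten_mapP => p /m_ps [h1 h2 h3 h4 _] Hw.
have : (w == p.1) || (w == p.2) by move: Hw; rewrite !inE.
by case/orP=> /eqP ->; apply/andP.
Qed.

Lemma m_wait : wait s' = wait s.
Proof.
rewrite /wait m_outs Rsum_cat /nps big_map.
rewrite [in RHS](Rsum_ID _ _ (fun w => w \in eps)).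
have -> : \big[Rplus/0]_(i | (arrived s i && free s i) && (i \in eps)) (now s - atime I i)
        = \big[Rplus/0]_(q <- ps) ((now s - atime I q.1) + (now s - atime I q.2)).
  rewrite (eq_bigl (fun i => i \in eps)); last first.
    move=> w; apply/idP/idP => [/andP [] //|Hw].
    by case/andP: (m_eps Hw) => /m_arrS -> ->; rewrite Hw.
  rewrite -big_uniq; last by case: Hok.
  rewrite big_flatten /= big_map; apply: eq_bigr => q _.
  by rewrite !big_cons big_nil /=; ring.
rewrite [in RHS](eq_bigl (fun i => arrived s i && free s' i)); last first.
  by move=> w; rewrite m_free andbA.
rewrite /waitp /= -Rplus_assoc.
have -> : arrived s' = arrived s by [].
by [].
Qed.

Lemma inv_merge : Inv s'.
Proof.
have Hact := m_act.
have HS : forall w a, w \in S -> a \in act s w -> a \in S.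
  move=> w a wS aw; move/subsetP: (m_actS wS); apply; done.
split.
- move=> w Hw; rewrite Hact; case: ifP => // _; exact: (i_self Hs _ Hw).
- move=> w a Hw; rewrite !Hact; case: ifP => wS.
    by move=> aS; rewrite aS.
  move=> aw; rewrite (negbTE (m_out Hw (negbT wS) aw)).
  exact: (i_part Hs _ _ Hw aw).
- move=> w a Hw; rewrite Hact; case: ifP => wS.
    by move=> /m_arrS.
  exact: (i_arr Hs _ _ Hw).
- exact: (i_ypos Hs).
- move=> T /(i_ysup Hs) [H1 H2]; split=> // w /H2 [Hw HT]; split=> //.
  rewrite Hact; case: ifP => // wS; exact: (subset_trans HT (m_actS wS)).
- exact: (i_feas Hs).
- exact: (i_yall Hs).
- move=> w a b Hw; rewrite Hact; case: ifP => wS; last exact: (i_dist Hs).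
  exact: m_distS.
- have Hy0 : 0 <= ysum y by apply: Rsum_ge0 => T _; apply: (i_ypos Hs).
  have HD : forall q, q \in ps -> D q.1 q.2 <= 2 * ysum y.
    move=> q /m_ps [h1 h2 _ _ _].
    have := m_distS h1 h2.
    have := m_Ypos S q.1; have := m_Ypos S q.2.
    have : Zsum y S <= ysum y.
      by apply: Rsum_mkle => // T; apply: (i_ypos Hs).
    rewrite -/y -/A -/B -/S; lra.
  rewrite /conn m_outs Rsum_cat /nps big_map size_cat size_map plus_INR.
  have := i_conn Hs; rewrite /conn -/y => h1.
  have : \big[Rplus/0]_(j <- ps) D j.1 j.2 <= INR (size ps) * (2 * ysum y).
    rewrite -Rsum_constR big_seq_cond [X in _ <= X]big_seq_cond.
    by apply: Rsum_le => q /andP [/HD].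
  have -> : dual s' = y by [].
  simpl; lra.
- rewrite m_wait; exact: (i_wy Hs).
- rewrite m_wait; exact: (i_wc Hs).
- rewrite m_outs endpoints_cat m_endmap cat_uniq (i_uniq Hs) /=.
  case: Hok => -> _; rewrite andbT; apply/hasPn => w /m_eps /andP [_].
  by rewrite /free.
- move=> w; rewrite m_outs endpoints_cat mem_cat m_endmap => /orP [/(i_earr Hs) //|].
  by case/m_eps/andP => /m_arrS.
- move=> p w; rewrite m_outs => Hp0 Hw; rewrite Hact.
  case: (List.in_app_or _ _ _ Hp0) => Hp.
    case: ifP => wS; last exact: (i_pin Hs).
    by rewrite !inE (i_pin Hs _ _ Hp Hu) (i_pin Hs _ _ Hp Hv).
  move: Hp; rewrite /nps => /List.in_map_iff [q [<- /In_mem /m_ps [h1 h2 _ _ _]]] /=.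
  case: ifP => wS; first by rewrite h1 h2.
  have E1 := m_out Hw (negbT wS) (x := q.1).
  have E2 := m_out Hw (negbT wS) (x := q.2).
  case: (boolP (q.1 \in act s w)) => H1; first by move: (E1 H1); rewrite h1.
  case: (boolP (q.2 \in act s w)) => H2 //; by move: (E2 H2); rewrite h2.
- move=> p; rewrite m_outs => Hp0.
  case: (List.in_app_or _ _ _ Hp0) => Hp; first exact: (i_pcmp Hs).
  move: Hp; rewrite /nps => /List.in_map_iff [q [<- /In_mem /m_ps [_ _ _ _ h]]] //.
- move=> w a b Hw; rewrite Hact; case: ifP => wS.
    case: Hok => _ [_ H3]; exact: H3.
  move=> aw bw; rewrite !m_free => /andP [fa _] /andP [fb _].
  exact: (i_fre Hs _ _ _ Hw aw bw fa fb).
Qed.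

End Merge.

Lemma Zbig_cons (I0 : Type) (x : I0) (r : seq I0) (F : I0 -> Z) :
  \big[Z.add/0%Z]_(i <- x :: r) F i = (F x + \big[Z.add/0%Z]_(i <- r) F i)%Z.
Proof. by rewrite big_cons. Qed.

Lemma Zbig_consP (I0 : Type) (x : I0) (r : seq I0) (P : pred I0) (F : I0 -> Z) :
  \big[Z.add/0%Z]_(i <- x :: r | P i) F i =
  ((if P x then F x else 0) + \big[Z.add/0%Z]_(i <- r | P i) F i)%Z.
Proof. by rewrite big_cons; case: (P x). Qed.

Ltac bsimp := cbn [negb andb addb]; cbv iota.

Lemma pairsumZ (r : seq (mtriple n)) (g : 'I_n -> Z) (T : {set 'I_n}) :
  uniq (endpoints r) ->
  \big[Z.add/0%Z]_(w : 'I_n | (w \in T) && (w \in endpoints r)) g w =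
  \big[Z.add/0%Z]_(p <- r) ((if p.1.1 \in T then g p.1.1 else 0) +
                            (if p.1.2 \in T then g p.1.2 else 0))%Z.
Proof.
move=> Hu.
rewrite (eq_bigl (fun w => (w \in endpoints r) && (w \in T))); last first.
  by move=> w; rewrite andbC.
rewrite big_mkcondr -big_uniq //.
rewrite /endpoints big_flatten /= big_map; apply: eq_bigr => p _.
by rewrite !Zbig_cons big_nil /= Z.add_0_r.
Qed.

Lemma Zabs_sum (I0 : Type) (r : seq I0) (h : I0 -> Z) :
  (Z.abs (\big[Z.add/0%Z]_(i <- r) h i) <= \big[Z.add/0%Z]_(i <- r) Z.abs (h i))%Z.
Proof.
elim: r => [|x r IH]; first by rewrite !big_nil.
rewrite !Zbig_cons; have := Z.abs_triangle (h x) (\big[Z.add/0%Z]_(i <- r) h i).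
lia.
Qed.

Lemma Zsum_le (I0 : Type) (r : seq I0) (h k : I0 -> Z) :
  (forall i, (h i <= k i)%Z) ->
  (\big[Z.add/0%Z]_(i <- r) h i <= \big[Z.add/0%Z]_(i <- r) k i)%Z.
Proof.
move=> H; elim: r => [|x r IH]; first by rewrite !big_nil.
by rewrite !Zbig_cons; have := H x; lia.
Qed.

Lemma sol_uniq : uniq (endpoints sol).
Proof. by case: Hsol. Qed.
Lemma sol_all w : w \in endpoints sol.
Proof. by case: Hsol => _ []. Qed.
Lemma sol_compat p : List.In p sol -> compat I p.1.1 p.1.2.
Proof.
case: Hsol => _ [_ HF] Hp; move/List.Forall_forall: HF => /(_ p Hp).
by case: p Hp => [[a b] t] /= _ [].
Qed.

Lemma sol_sumZ (g : 'I_n -> Z) (T : {set 'I_n}) :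
  \big[Z.add/0%Z]_(w : 'I_n | w \in T) g w =
  \big[Z.add/0%Z]_(p <- sol) ((if p.1.1 \in T then g p.1.1 else 0) +
                              (if p.1.2 \in T then g p.1.2 else 0))%Z.
Proof.
rewrite -pairsumZ ?sol_uniq //; apply: eq_bigl => w; by rewrite sol_all andbT.
Qed.

Lemma sum_In (A0 : Type) (r : seq A0) (h k : A0 -> Z) :
  (forall x, List.In x r -> h x = k x) ->
  \big[Z.add/0%Z]_(x <- r) h x = \big[Z.add/0%Z]_(x <- r) k x.
Proof.
elim: r => [|x r IH] H; first by rewrite !big_nil.
rewrite !Zbig_cons H /=; last by left.
by rewrite IH // => z Hz; apply: H; right.
Qed.

Lemma sum_In_le (A0 : Type) (r : seq A0) (h k : A0 -> Z) :
  (forall x, List.In x r -> (h x <= k x)%Z) ->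
  (\big[Z.add/0%Z]_(x <- r) h x <= \big[Z.add/0%Z]_(x <- r) k x)%Z.
Proof.
elim: r => [|x r IH] H; first by rewrite !big_nil.
rewrite !Zbig_cons; have := H x (or_introl erefl).
have := IH (fun z Hz => H z (or_intror Hz)); lia.
Qed.

Lemma cntZ (T : {set 'I_n}) :
  Z.of_nat (cnt T) = \big[Z.add/0%Z]_(p <- sol)
     (if (p.1.1 \in T) (+) (p.1.2 \in T) then 1 else 0)%Z.
Proof.
rewrite /cnt Z_sum; apply: eq_bigr => p _.
by case: ((p.1.1 \in T) (+) (p.1.2 \in T)).
Qed.

Section Count.
Variables (s : st) (w0 : 'I_n).
Hypothesis Hs : Inv s.
Hypothesis Hw0 : arrived s w0.
Let T := act s w0.

Definition fcnt := (\sum_(w : 'I_n | (w \in T) && free s w) 1)%N.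

Lemma out_sumZ (g : 'I_n -> Z) :
  \big[Z.add/0%Z]_(w : 'I_n | w \in T) g w =
  (\big[Z.add/0%Z]_(w : 'I_n | (w \in T) && free s w) g w +
  \big[Z.add/0%Z]_(p <- out s) ((if p.1.1 \in T then g p.1.1 else 0) +
                              (if p.1.2 \in T then g p.1.2 else 0)))%Z.
Proof.
rewrite (bigID (fun w => free s w)) /= -pairsumZ ?(i_uniq Hs) //.
congr (_ + _)%Z; apply: eq_bigl => w; by rewrite /free negbK.
Qed.

Lemma fcntZ : Z.of_nat fcnt = \big[Z.add/0%Z]_(w : 'I_n | (w \in T) && free s w) 1%Z.
Proof. by rewrite /fcnt Z_sum. Qed.

Lemma count_ok : (fcnt <= cnt T)%N.
Proof.
apply/leP; apply/Nat2Z.inj_le; rewrite fcntZ.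
case: Hsgn => Hsg.
-
  have Hc : forall a b, a != b -> compat I a b.
    by move=> a b /eqP Hab; split=> //; rewrite !Hsg.
  have Hle1 : (\big[Z.add/0%Z]_(w : 'I_n | (w \in T) && free s w) 1 <= 1)%Z.
    case: (pickP (fun w => (w \in T) && free s w)) => [w1 /andP [w1T fw1]|H0].
      rewrite (big_pred1 w1) //= => w; apply/andP/eqP => [[wT fw]|->] //.
      apply/eqP; apply/negPn/negP => Hne.
      by apply: (i_fre Hs _ _ _ Hw0 wT w1T fw fw1); apply: Hc.
    by rewrite big_pred0.
  have E1 := out_sumZ (fun _ => 1%Z).
  rewrite sol_sumZ in E1.
  have E2 : \big[Z.add/0%Z]_(p <- sol) ((if p.1.1 \in T then 1 else 0) +
                              (if p.1.2 \in T then 1 else 0))%Z =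
      (2 * \big[Z.add/0%Z]_(p <- sol) (if (p.1.1 \in T) && (p.1.2 \in T) then 1 else 0) +
       Z.of_nat (cnt T))%Z.
    rewrite cntZ; elim: sol => [|q r IH]; first by rewrite !big_nil.
    rewrite !Zbig_cons IH.
    by case: (q.1.1 \in T); case: (q.1.2 \in T); bsimp; lia.
  have E3 : \big[Z.add/0%Z]_(p <- out s) ((if p.1.1 \in T then 1 else 0) +
                              (if p.1.2 \in T then 1 else 0))%Z =
      (2 * \big[Z.add/0%Z]_(p <- out s) (if p.1.1 \in T then 1 else 0))%Z.
    have : forall p, List.In p (out s) -> (p.1.1 \in T) = (p.1.2 \in T).
      by move=> p Hp; apply: (i_pin Hs _ _ Hp Hw0).
    elim: (out s) => [|q r IH] H; first by rewrite !big_nil.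
    rewrite !Zbig_cons IH; last by move=> p Hp; apply: H; right.
    by rewrite -(H q (or_introl erefl)); case: (q.1.1 \in T); bsimp; lia.
  have Hpos : (0 <= \big[Z.add/0%Z]_(w : 'I_n | (w \in T) && free s w) 1)%Z.
    by apply: (big_ind (fun x => 0 <= x)%Z) => //; lia.
  rewrite E2 E3 in E1; lia.
-
  have Hsg1 : forall a, (Z.abs (sgn I a) = 1)%Z by move=> a; case: (Hsg a) => ->.
  have HS := out_sumZ (sgn I).
  have Hout : \big[Z.add/0%Z]_(p <- out s) ((if p.1.1 \in T then sgn I p.1.1 else 0) +
                              (if p.1.2 \in T then sgn I p.1.2 else 0))%Z = 0%Z.
    rewrite (sum_In _ _ _ (fun _ => 0%Z)) ?big1 // => p Hp.
    have := i_pin Hs _ _ Hp Hw0; rewrite -/T => E.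
    case: (i_pcmp Hs _ Hp) => _ Hc.
    by rewrite E; case: (p.1.2 \in T); bsimp; lia.
  rewrite Hout Z.add_0_r sol_sumZ in HS.
  have Hsolb : (Z.abs (\big[Z.add/0%Z]_(p <- sol) ((if p.1.1 \in T then sgn I p.1.1 else 0) +
                              (if p.1.2 \in T then sgn I p.1.2 else 0))) <= Z.of_nat (cnt T))%Z.
    apply: (Z.le_trans _ _ _ (Zabs_sum _ _ _)); rewrite cntZ.
    apply: sum_In_le => p Hp; case: (sol_compat _ Hp) => _ Hc.
    have := Hsg1 p.1.1; have := Hsg1 p.1.2.
    by case: (p.1.1 \in T); case: (p.1.2 \in T); bsimp; lia.
  rewrite HS in Hsolb.
  case: (pickP (fun w => (w \in T) && free s w)) => [w1 /andP [w1T fw1]|H0]; last first.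
    by rewrite big_pred0 //; apply: (Zle_0_nat (cnt T)).
  have Hsame : \big[Z.add/0%Z]_(w : 'I_n | (w \in T) && free s w) sgn I w =
               \big[Z.add/0%Z]_(w : 'I_n | (w \in T) && free s w) sgn I w1.
    apply: eq_bigr => w /andP [wT fw].
    case: (eqVneq w w1) => [->//|Hne].
    have Hnc : ~ compat I w w1 by apply: (i_fre Hs _ _ _ Hw0 wT w1T fw fw1).
    case: (Hsg w) => Hw; case: (Hsg w1) => Hw1; rewrite Hw Hw1 //;
      by exfalso; apply: Hnc; split; [apply/eqP | lia].
  have Hmul : forall c : Z, \big[Z.add/0%Z]_(w : 'I_n | (w \in T) && free s w) c =
       (c * \big[Z.add/0%Z]_(w : 'I_n | (w \in T) && free s w) 1)%Z.
    move=> c; elim: (index_enum _) => [|x r IH]; first by rewrite !big_nil; lia.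
    by rewrite !Zbig_consP IH; case: ifP => _; rewrite Z.mul_add_distr_l ?Z.mul_1_r ?Z.mul_0_r.
  rewrite Hsame Hmul in Hsolb.
  have Hpos : (0 <= \big[Z.add/0%Z]_(w : 'I_n | (w \in T) && free s w) 1)%Z.
    by apply: (big_ind (fun x => 0 <= x)%Z) => //; lia.
  move: Hsolb; rewrite Z.abs_mul (Hsg1 w1) Z.abs_eq //; lia.
Qed.

End Count.

Section Grow.
Variables (s : st) (d : R).
Hypothesis Hs : Inv s.
Hypothesis Hd : 0 < d.
Hypothesis Hfeas : dual_feasible dist I (grown s d).

Let s' := grown s d.
Let y := dual s.

Lemma g_dual T : dual s' T = if growing s T then y T + d else y T.
Proof. by []. Qed.

Lemma g_act {T} : growing s T -> exists w0, arrived s w0 /\ act s w0 = T.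
Proof. by case/andP => /existsP [w0 /andP [Hw /eqP <-]] _; exists w0. Qed.

Lemma g_mem {T a} : growing s T -> a \in T -> arrived s a /\ act s a = T.
Proof.
move=> /g_act [w0 [Hw <-]] aT; split; first exact: (i_arr Hs _ _ Hw aT).
exact: (i_part Hs _ _ Hw aT).
Qed.

Lemma g_sum (P : pred {set 'I_n}) (wt : {set 'I_n} -> R) :
  \big[Rplus/0]_(T : {set 'I_n} | P T) (wt T * dual s' T) =
  \big[Rplus/0]_(T : {set 'I_n} | P T) (wt T * y T) + d * \big[Rplus/0]_(T : {set 'I_n} | P T && growing s T) wt T.
Proof.
rewrite -Rsum_const_mul big_mkcondr -Rsum_split; apply: eq_bigr => T _.
by rewrite g_dual; case: ifP => _; ring.
Qed.

Lemma g_sum1 (P : pred {set 'I_n}) :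
  \big[Rplus/0]_(T : {set 'I_n} | P T) dual s' T =
  \big[Rplus/0]_(T : {set 'I_n} | P T) y T + d * \big[Rplus/0]_(T : {set 'I_n} | P T && growing s T) 1.
Proof.
rewrite -Rsum_const_mul big_mkcondr -Rsum_split; apply: eq_bigr => T _.
by rewrite g_dual; case: ifP => _; ring.
Qed.

Lemma g_Ysum S a : Ysum (dual s') S a = Ysum y S a +
  d * \big[Rplus/0]_(T : {set 'I_n} | ((T \subset S) && (a \in T)) && growing s T) 1.
Proof. exact: g_sum1. Qed.
Lemma g_Zsum S : Zsum (dual s') S = Zsum y S +
  d * \big[Rplus/0]_(T : {set 'I_n} | (T \subset S) && growing s T) 1.
Proof. exact: g_sum1. Qed.
Lemma g_ysum : ysum (dual s') = ysum y +
  d * \big[Rplus/0]_(T : {set 'I_n} | growing s T) 1.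
Proof. exact: (g_sum1 xpredT). Qed.
Lemma g_cy : cy (dual s') = cy y +
  d * \big[Rplus/0]_(T : {set 'I_n} | growing s T) INR (cnt T).
Proof. exact: (g_sum xpredT). Qed.

Lemma arith5 D0 Ya Yb Z0 ka kb K : D0 + Ya + Yb <= 2 * Z0 -> d * ka <= d * K ->
  d * kb <= d * K -> D0 + (Ya + d * ka) + (Yb + d * kb) <= 2 * (Z0 + d * K).
Proof. lra. Qed.

Lemma Rsum_shift (I0 : Type) (r : seq I0) (P : pred I0) (F : I0 -> R) x :
  \big[Rplus/0]_(i <- r | P i) (x + d - F i) =
  \big[Rplus/0]_(i <- r | P i) (x - F i) + d * \big[Rplus/0]_(i <- r | P i) 1.
Proof.
rewrite -Rsum_const_mul -Rsum_split; apply: eq_bigr => *; ring.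
Qed.

Lemma wait_grow : wait s' = wait s + d * \big[Rplus/0]_(w | arrived s w && free s w) 1.
Proof.
rewrite /wait.
have -> : \big[Rplus/0]_(w | arrived s' w && free s' w) (now s' - atime I w) =
          \big[Rplus/0]_(w | arrived s w && free s w) (now s + d - atime I w) by [].
by rewrite Rsum_shift Rplus_assoc.
Qed.

Lemma sum1_le1 (Q : pred {set 'I_n}) (T0 : {set 'I_n}) :
  (forall T, Q T -> T = T0) -> \big[Rplus/0]_(T : {set 'I_n} | Q T) 1 <= 1.
Proof.
move=> H; apply: (Rle_trans _ (\big[Rplus/0]_(T : {set 'I_n} | T == T0) 1)).
  apply: Rsum_mkle => [T|T /H ->]; [lra | by rewrite eqxx].
by rewrite big_pred1_eq; lra.
Qed.

Lemma sum1_pos (Q : pred {set 'I_n}) : 0 <= \big[Rplus/0]_(T : {set 'I_n} | Q T) 1.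
Proof. by apply: Rsum_ge0 => *; lra. Qed.

Lemma g_free_sum :
  \big[Rplus/0]_(w | arrived s w && free s w) 1 =
  \big[Rplus/0]_(T : {set 'I_n} | growing s T) \big[Rplus/0]_(w | (w \in T) && free s w) 1.
Proof.
rewrite (partition_big (act s) (fun T => growing s T)) /=; last first.
  move=> w /andP [Hw fw]; apply/andP; split.
    by apply/existsP; exists w; rewrite Hw eqxx.
  by apply/existsP; exists w; rewrite (i_self Hs _ Hw).
apply: eq_bigr => T HT; apply: eq_bigl => w.
apply/idP/idP => [/andP [/andP [Hw fw] /eqP <-]|/andP [wT fw]].
  by rewrite (i_self Hs _ Hw).
by case: (g_mem HT wT) => -> ->; rewrite fw eqxx.
Qed.

Lemma g_inner_ge1 T : growing s T ->
  1 <= \big[Rplus/0]_(w | (w \in T) && free s w) 1.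
Proof.
case/andP => _ /existsP [w /andP [wT fw]].
rewrite (Rsum_D1 _ w); last by rewrite wT fw.
have : 0 <= \big[Rplus/0]_(i | ((i \in T) && free s i) && (i != w)) 1.
  by apply: Rsum_ge0 => *; lra.
lra.
Qed.

Lemma g_inner_cnt T : growing s T ->
  \big[Rplus/0]_(w | (w \in T) && free s w) 1 <= INR (cnt T).
Proof.
move=> HT; case: (g_act HT) => w0 [Hw0 E].
have := count_ok _ _ Hs Hw0; rewrite /fcnt E => /leP /le_INR.
by rewrite INR_sum.
Qed.

Lemma inv_grow : Inv s'.
Proof.
have Hd0 : 0 <= d by lra.
have ypos := i_ypos Hs.
split.
- exact (i_self Hs).
- exact (i_part Hs).
- exact (i_arr Hs).
- move=> T; rewrite g_dual; have := ypos T; case: ifP => _; rewrite -/y; lra.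
- move=> T; rewrite g_dual; case: ifP => HT; last exact: (i_ysup Hs).
  move=> _; case: (g_act HT) => w0 [Hw0 E]; split.
    by apply/set0Pn; exists w0; rewrite -E (i_self Hs _ Hw0).
  by move=> w wT; case: (g_mem HT wT) => Hw ->.
- move=> a b Ha Hb Hc; case: (eqVneq (act s a) (act s b)) => Hab; last exact: Hfeas.
  rewrite /dualsum g_sum1 (big_pred0 _ _ _ _ (P := fun T => _ && _)).
    rewrite Rmult_0_r Rplus_0_r; exact: (i_feas Hs).
  move=> T /=; apply/negbTE/negP => /andP [Hsep HT].
  case: (boolP (a \in T)) Hsep => aT.
    case: (g_mem HT aT) => _ E; rewrite -E Hab (i_self Hs _ Hb) //.
  case: (boolP (b \in T)) => bT //.
  case: (g_mem HT bT) => _ E; move: aT; rewrite -E -Hab (i_self Hs _ Ha) //.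
- move=> v Hv; rewrite /Yall g_sum1 /=.
  have := i_yall Hs _ Hv; rewrite /Yall -/y.
  have : \big[Rplus/0]_(T : {set 'I_n} | (v \in T) && growing s T) 1 <= 1.
    apply: (sum1_le1 _ (act s v)) => T0 /andP [vT HT].
    by case: (g_mem HT vT).
  move=> H1 H2; have H3 : d * \big[Rplus/0]_(T : {set 'I_n} | (v \in T) && growing s T) 1 <= d * 1.
    by apply: Rmult_le_compat_l.
  apply: (Rle_trans _ (now s - atime I v + d * 1)).
    exact: (Rplus_le_compat _ _ _ _ H2 H3).
  lra.
- move=> w a b Hw Ha Hb; rewrite !g_Ysum g_Zsum.
  have Hk : forall c, \big[Rplus/0]_(T : {set 'I_n} | ((T \subset act s w) && (c \in T)) && growing s T) 1 <=
     \big[Rplus/0]_(T : {set 'I_n} | (T \subset act s w) && growing s T) 1.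
    move=> c; apply: Rsum_mkle => [T|T]; first lra.
    by case/andP => /andP [-> _] ->.
  apply: arith5; first exact: (i_dist Hs _ _ _ Hw Ha Hb).
  1-2: by apply: Rmult_le_compat_l => //; apply: Hk.
- have Hy : ysum y <= ysum (dual s').
    rewrite g_ysum; have := sum1_pos (fun T => growing s T).
    move=> H; have := Rmult_le_pos d _ Hd0 H; lra.
  have := i_conn Hs; have := pos_INR (size (out s)).
  move=> H1 H2; apply: Rle_trans H2 _.
  apply: Rmult_le_compat_l => //; lra.
- have Hw := wait_grow.
  rewrite Hw g_ysum.
  have := i_wy Hs; rewrite -/y => H1.
  have : \big[Rplus/0]_(T : {set 'I_n} | growing s T) 1 <= \big[Rplus/0]_(w | arrived s w && free s w) 1.
    rewrite g_free_sum; apply: Rsum_le => T HT; exact: g_inner_ge1.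
  move=> H2; have := Rmult_le_compat_l d _ _ Hd0 H2; move=> *; lra.
- have Hw := wait_grow.
  rewrite Hw g_cy.
  have := i_wc Hs; rewrite -/y => H1.
  have : \big[Rplus/0]_(w | arrived s w && free s w) 1 <= \big[Rplus/0]_(T : {set 'I_n} | growing s T) INR (cnt T).
    rewrite g_free_sum; apply: Rsum_le => T HT; exact: g_inner_cnt.
  move=> H2; have := Rmult_le_compat_l d _ _ Hd0 H2; move=> *; lra.
- exact (i_uniq Hs).
- exact (i_earr Hs).
- exact (i_pin Hs).
- exact (i_pcmp Hs).
- exact (i_fre Hs).
Qed.

End Grow.

Lemma inv_reach s : gd_reach dist I s -> Inv s.
Proof.
elim=> [|s0 s1 _ IH Hst]; first exact: inv_init.
case: Hst IH => [s2 d Hd _ _ Hf|s2 u Hu Ht|s2 u v ps Hu Hv Hc Hne Ht Hok] IH.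
- exact: inv_grow.
- exact: inv_arrive.
- exact: inv_merge.
Qed.

Lemma total_costE (r : seq (mtriple n)) :
  total_cost dist I r = \big[Rplus/0]_(p <- r) D p.1.1 p.1.2 + \big[Rplus/0]_(p <- r) waitp p.
Proof.
elim: r => [|p r IH]; first by rewrite /total_cost /= !big_nil; ring.
rewrite /total_cost /= -/(total_cost dist I r) IH !big_cons.
by case: p => [[a b] t] /=; rewrite /waitp /=; ring.
Qed.

Lemma dualsumE (y : {set 'I_n} -> R) a b :
  dualsum y a b = \big[Rplus/0]_(T : {set 'I_n}) (if (a \in T) (+) (b \in T) then y T else 0).
Proof.
rewrite /dualsum big_mkcond; apply: eq_bigr => T _.
by case: (a \in T); case: (b \in T).
Qed.

Lemma cy_sol (y : {set 'I_n} -> R) :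
  cy y = \big[Rplus/0]_(p <- sol) dualsum y p.1.1 p.1.2.
Proof.
rewrite /cy (eq_bigr (fun T : {set 'I_n} => \big[Rplus/0]_(p <- sol)
   (if (p.1.1 \in T) (+) (p.1.2 \in T) then y T else 0))); last first.
  move=> T _; rewrite /cnt INR_sum Rmult_comm -Rsum_const_mul.
  by apply: eq_bigr => p _; case: ((p.1.1 \in T) (+) (p.1.2 \in T)) => /=; ring.
rewrite exchange_big /=; apply: eq_bigr => p _; by rewrite dualsumE.
Qed.

Lemma Rsum_In_le (A0 : Type) (r : seq A0) (h k : A0 -> R) :
  (forall x, List.In x r -> h x <= k x) ->
  \big[Rplus/0]_(x <- r) h x <= \big[Rplus/0]_(x <- r) k x.
Proof.
elim: r => [|x r IH] H; first by rewrite !big_nil; lra.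
rewrite !big_cons; have := H x (or_introl erefl).
have := IH (fun z Hz => H z (or_intror Hz)); simpl; lra.
Qed.

Lemma final_bound s : Inv s -> gd_done s ->
  total_cost dist I (out s) <= INR (n + 1) * total_cost dist I sol.
Proof.
move=> Hs [Hn Hnf].
have Harr : forall w, arrived s w by move=> w; rewrite /arrived Hn ltn_ord.
have Hw : wait s = \big[Rplus/0]_(p <- out s) waitp p.
  rewrite /wait (big_pred0 _ _ _ _ (P := fun w => arrived s w && free s w)).
    by rewrite Rplus_0_r.
  by move=> w /=; rewrite (negbTE (Hnf w)) andbF.
have Hsz : INR (2 * size (out s)) = INR n.
  rewrite -size_endpoints; congr INR.
  transitivity (size (enum 'I_n)); last exact: size_enum_ord.
  apply: perm_size; apply: uniq_perm.
  - exact: (i_uniq Hs).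
  - exact: enum_uniq.
  - by move=> w; rewrite mem_enum; move: (Hnf w); rewrite /free negbK => ->.
have Hc : conn s <= INR n * ysum (dual s).
  have E2 : INR 2 = 2 by simpl; ring.
  by rewrite -Hsz mult_INR E2; exact: (i_conn Hs).
have Hwy := i_wy Hs; have Hwc := i_wc Hs.
have Hcs : cy (dual s) <= total_cost dist I sol.
  rewrite cy_sol total_costE -Rsum_split.
  apply: Rsum_In_le => p Hp.
  have Hcp := sol_compat _ Hp.
  apply: (Rle_trans _ _ _ (i_feas Hs _ _ (Harr _) (Harr _) Hcp)).
  case: Hsol => _ [_ HF]; move/List.Forall_forall: HF => /(_ p Hp).
  case: p {Hp Hcp} => [[a b] t] /= [_ [Ha Hb]].
  rewrite /ecost /waitp /=; apply: Rplus_le_compat_l; apply: Rabs_le; lra.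
have Hn0 := pos_INR n.
apply: (Rle_trans _ (conn s + wait s)).
  by rewrite total_costE Hw; apply: Rle_refl.
have H1 : INR n * ysum (dual s) <= INR n * wait s by apply: Rmult_le_compat_l.
have H2 : (INR n + 1) * wait s <= (INR n + 1) * cy (dual s).
  by apply: Rmult_le_compat_l; lra.
have H3 : (INR n + 1) * cy (dual s) <= (INR n + 1) * total_cost dist I sol.
  by apply: Rmult_le_compat_l; lra.
rewrite plus_INR /=; lra.
Qed.
End Main.

Theorem theorem1 :
  forall (X : Type) (dist : X -> X -> R) (bip : bool) (m : nat)
         (I : instance X (2 * m)),
    metric dist ->
    valid_instance bip I ->
    forall s : gstate (2 * m),
      gd_reach dist I s ->
      gd_done s ->
      forall sol : seq (mtriple (2 * m)),
        offline_solution I sol ->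
        Rle (total_cost dist I (out s)) (Rmult (INR (2 * m + 1)) (total_cost dist I sol)).
Proof.
move=> X dist bip m I Hmet [_ [_ Hv]] s Hr Hd sol Hsol.
have Hsgn : (forall i, sgn I i = 0%Z) \/ (forall i, sgn I i = 1%Z \/ sgn I i = (-1)%Z).
  by case: bip Hv => [[H _]|H]; [right|left].
apply: (final_bound _ _ _ _ _ Hsol s _ Hd).
exact: (inv_reach _ _ _ _ _ Hmet Hsgn Hsol s Hr).
Qed.
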